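(* Let $R$ be an integral domain and $p,q\in R$. The matrix $\begin{pmatrix} p & q\\ 0 & 0\end{pmatrix}$ is a product of idempotent $2\times 2$ matrices over $R$ if and only if $\begin{pmatrix} q & p\\ 0 & 0\end{pmatrix}$ is a product of idempotent $2\times 2$ matrices over $R$.
   Context: A matrix $E$ over $R$ is idempotent if $E^2=E$. ''Product of idempotent matrices'' means a finite product of idempotent $2\times2$ matrices with entries in $R$. *)

(* Defs.v *)
From HB Require Import structures.
From mathcomp Require Import all_boot all_order all_algebra.
Set Implicit Arguments. Unset Strict Implicit. Unset Printing Implicit Defensive.
Import GRing.Theory.
Local Open Scope ring_scope.

Definition idempotent_mx (R : pzRingType) (n : nat) (E : 'M[R]_n) : Prop :=
  E *m E = E.

Definition prod_idempotents (R : pzRingType) (n : nat) (M : 'M[R]_n) : Prop :=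
  exists s : seq 'M[R]_n,
    (forall E, E \in s -> idempotent_mx E) /\
    M = foldr (fun A B => A *m B) 1%:M s.

Definition row_top (R : pzRingType) (a b : R) : 'M[R]_2 :=
  \matrix_(i < 2, j < 2)
    (if (i : nat) == 0%N then (if (j : nat) == 0%N then a else b) else 0).

(* Main.v *)
Require Import Defs.
From HB Require Import structures.
From mathcomp Require Import all_boot all_order all_algebra.
Local Open Scope ring_scope.
Import GRing.Theory.

Section H.
Variable R : pzRingType.

Definition Pm : 'M[R]_2 := \matrix_(i < 2, j < 2) (if i == j then 0 else 1).
Definition Fm : 'M[R]_2 := \matrix_(i < 2, j < 2) (if (i : nat) == 0%N then 1 else 0).

Ltac m2 := apply/matrixP; case=> [[|[|?]] ?] //; case=> [[|[|?]] ?] //;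
  rewrite !mxE ?big_ord_recl ?big_ord0 /= !mxE /=;
  do 3 (rewrite ?big_ord_recl ?big_ord0 /= ?mxE /=);
  rewrite ?mulr0 ?mul0r ?mulr1 ?mul1r ?addr0 ?add0r //.

Lemma PP : Pm *m Pm = 1%:M.
Proof. rewrite /Pm. m2. Qed.

Lemma Fidem : idempotent_mx Fm.
Proof. rewrite /idempotent_mx /Fm. m2. Qed.

Lemma key (p q : R) : Fm *m (Pm *m row_top p q *m Pm) = row_top q p.
Proof. rewrite /Fm /Pm /row_top. m2. Qed.

Lemma conj_idem E : idempotent_mx E -> idempotent_mx (Pm *m E *m Pm).
Proof.
rewrite /idempotent_mx => HE.
by rewrite !mulmxA -(mulmxA _ Pm Pm) PP mulmx1 -(mulmxA _ E E) HE.
Qed.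

Lemma foldr_conj (s : seq 'M[R]_2) :
  foldr (fun A B => A *m B) 1%:M [seq Pm *m E *m Pm | E <- s] =
  Pm *m foldr (fun A B => A *m B) 1%:M s *m Pm.
Proof.
elim: s => [|E s IH] /=; first by rewrite mulmx1 PP.
by rewrite IH !mulmxA -(mulmxA _ Pm Pm) PP mulmx1.
Qed.

Lemma one_dir (p q : R) :
  prod_idempotents (row_top p q) -> prod_idempotents (row_top q p).
Proof.
case=> s [Hs Hm].
exists (Fm :: [seq Pm *m E *m Pm | E <- s]); split.
  move=> E; rewrite inE => /orP [/eqP -> | /mapP [E' HE' ->]].
    exact: Fidem.
  by apply: conj_idem; apply: Hs.
by rewrite /= foldr_conj -Hm key.
Qed.
End H.

Theorem lemma3p1 (R : idomainType) (p q : R) :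
  prod_idempotents (row_top p q) <-> prod_idempotents (row_top q p).
Proof. split; exact: one_dir. Qed.
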